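(* Let $\hat{\mathbf Q}=\tilde{\mathbf Q}_{st}+\tilde{\mathbf Q}_{\mathcal I}\varepsilon$ be a $2\times2$ dual quaternion Hermitian matrix with $\tilde{\mathbf Q}_{st}=\begin{bmatrix} a&\tilde c\\ \tilde c^\ast&b\end{bmatrix}$, $\tilde c\ne0$. Let $\lambda_1,\lambda_2$ be the solutions of $(a-x)(b-x)=\tilde c^\ast\tilde c$, and let $\tilde{\mathbf U}$ be the unitary quaternion matrix $$\tilde{\mathbf U}=\begin{bmatrix}\frac{-\tilde c}{((a-\lambda_1)^2+\tilde c^\ast\tilde c)^{1/2}} & \frac{-\tilde c}{((a-\lambda_2)^2+\tilde c^\ast\tilde c)^{1/2}}\\ \frac{a-\lambda_1}{((a-\lambda_1)^2+\tilde c^\ast\tilde c)^{1/2}} & \frac{a-\lambda_2}{((a-\lambda_2)^2+\tilde c^\ast\tilde c)^{1/2}}\end{bmatrix},$$ which satisfies $\tilde{\mathbf U}^\ast\tilde{\mathbf Q}_{st}\tilde{\mathbf U}=\mathrm{diag}(\lambda_1,\lambda_2)$. Write $\tilde{\mathbf U}^\ast\tilde{\mathbf Q}_{\mathcal I}\tilde{\mathbf U}=\begin{bmatrix}x&\tilde z\\ \tilde z^\ast&y\end{bmatrix}$ and define $$\hat{\mathbf V}=\begin{bmatrix}1&\frac{\tilde z}{\lambda_2-\lambda_1}\varepsilon\\ \frac{\tilde z^\ast}{\lambda_1-\lambda_2}\varepsilon&1\end{bmatrix}.$$ Then $\hat{\mathbf V}^\ast\tilde{\mathbf U}^\ast\hat{\mathbf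 Q}^\ast\tilde{\mathbf U}\hat{\mathbf V}=\mathrm{diag}(\lambda_1+x\varepsilon,\lambda_2+y\varepsilon)$, which is a diagonal dual number matrix, and $\tilde{\mathbf U}\hat{\mathbf V}$ is a unitary dual quaternion matrix.
   Context: Quaternions $q=q_0+q_1\mathbf i+q_2\mathbf j+q_3\mathbf k$ (real $q_i$, Hamilton multiplication), conjugate $q^\ast=q_0-q_1\mathbf i-q_2\mathbf j-q_3\mathbf k$. A dual quaternion is $q_{st}+q_{\mathcal I}\varepsilon$ with quaternions $q_{st},q_{\mathcal I}$, where $\varepsilon$ commutes with quaternions, $\varepsilon\ne0$, $\varepsilon^2=0$; multiplication $(p_{st}+p_{\mathcal I}\varepsilon)(q_{st}+q_{\mathcal I}\varepsilon)=p_{st}q_{st}+(p_{st}q_{\mathcal I}+p_{\mathcal I}q_{st})\varepsilon$; conjugate $q_{st}^\ast+q_{\mathcal I}^\ast\varepsilon$. Dual numbers are dual quaternions with real standard and dual parts. A dual quaternion matrix is Hermitian if it equals its conjugate transpose and unitary if $\hat{\mathbf U}^\ast\hat{\mathbf U}=\hat{\mathbf U}\hat{\mathbf U}^\ast=\hat{\mathbf I}$. *)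

(* Defs.v *)
From HB Require Import structures.
From mathcomp Require Import all_boot all_order all_algebra.
Set Implicit Arguments. Unset Strict Implicit. Unset Printing Implicit Defensive.
Import Order.TTheory GRing.Theory Num.Theory.
Local Open Scope ring_scope.

Section Quat.
Variable R : rcfType.

(* q = q0 + q1 i + q2 j + q3 k *)
Record quat := Quat { q0 : R; q1 : R; q2 : R; q3 : R }.

Definition qreal (r : R) : quat := Quat r 0 0 0.
Definition qzero : quat := qreal 0.
Definition qone : quat := qreal 1.
Definition qadd (p q : quat) : quat :=
  Quat (q0 p + q0 q) (q1 p + q1 q) (q2 p + q2 q) (q3 p + q3 q).
Definition qopp (p : quat) : quat := Quat (- q0 p) (- q1 p) (- q2 p) (- q3 p).
Definition qmul (p q : quat) : quat :=
  Quat (q0 p * q0 q - q1 p * q1 q - q2 p * q2 q - q3 p * q3 q)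
       (q0 p * q1 q + q1 p * q0 q + q2 p * q3 q - q3 p * q2 q)
       (q0 p * q2 q - q1 p * q3 q + q2 p * q0 q + q3 p * q1 q)
       (q0 p * q3 q + q1 p * q2 q - q2 p * q1 q + q3 p * q0 q).
Definition qconj (p : quat) : quat := Quat (q0 p) (- q1 p) (- q2 p) (- q3 p).
Definition qscale (r : R) (p : quat) : quat := qmul (qreal r) p.

(* dual quaternions q_st + q_I eps *)
Record dquat := DQ { dst : quat; ddu : quat }.
Definition dqadd (p q : dquat) : dquat := DQ (qadd (dst p) (dst q)) (qadd (ddu p) (ddu q)).
Definition dqmul (p q : dquat) : dquat :=
  DQ (qmul (dst p) (dst q)) (qadd (qmul (dst p) (ddu q)) (qmul (ddu p) (dst q))).
Definition dqconj (p : dquat) : dquat := DQ (qconj (dst p)) (qconj (ddu p)).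
Definition dqzero : dquat := DQ qzero qzero.
Definition dqone : dquat := DQ qone qzero.
Definition dnum (r s : R) : dquat := DQ (qreal r) (qreal s).
Definition dq_of_q (p : quat) : dquat := DQ p qzero.
End Quat.

Record M2 (T : Type) := Mx2 { e11 : T; e12 : T; e21 : T; e22 : T }.

Definition m2map (T U : Type) (f : T -> U) (A : M2 T) : M2 U :=
  Mx2 (f (e11 A)) (f (e12 A)) (f (e21 A)) (f (e22 A)).
Definition m2mul (T : Type) (add mul : T -> T -> T) (A B : M2 T) : M2 T :=
  Mx2 (add (mul (e11 A) (e11 B)) (mul (e12 A) (e21 B)))
      (add (mul (e11 A) (e12 B)) (mul (e12 A) (e22 B)))
      (add (mul (e21 A) (e11 B)) (mul (e22 A) (e21 B)))
      (add (mul (e21 A) (e12 B)) (mul (e22 A) (e22 B))).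
Definition m2ct (T : Type) (cj : T -> T) (A : M2 T) : M2 T :=
  Mx2 (cj (e11 A)) (cj (e21 A)) (cj (e12 A)) (cj (e22 A)).

Section Mats.
Variable R : rcfType.
Definition qmx_mul := m2mul (@qadd R) (@qmul R).
Definition qmx_ct := m2ct (@qconj R).
Definition dqmx_mul := m2mul (@dqadd R) (@dqmul R).
Definition dqmx_ct := m2ct (@dqconj R).
Definition dqmx_one : M2 (dquat R) := Mx2 (dqone R) (dqzero R) (dqzero R) (dqone R).
Definition dqmx_diag (d1 d2 : dquat R) : M2 (dquat R) := Mx2 d1 (dqzero R) (dqzero R) d2.
Definition dqmx_hermitian (A : M2 (dquat R)) : Prop := dqmx_ct A = A.
Definition dqmx_unitary (A : M2 (dquat R)) : Prop :=
  dqmx_mul (dqmx_ct A) A = dqmx_one /\ dqmx_mul A (dqmx_ct A) = dqmx_one.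
Definition dqmx_of (S I : M2 (quat R)) : M2 (dquat R) :=
  Mx2 (DQ (e11 S) (e11 I)) (DQ (e12 S) (e12 I)) (DQ (e21 S) (e21 I)) (DQ (e22 S) (e22 I)).
Definition Umat (a : R) (c : quat R) (l1 l2 : R) : M2 (quat R) :=
  let n1 := Num.sqrt ((a - l1) ^+ 2 + q0 (qmul (qconj c) c)) in
  let n2 := Num.sqrt ((a - l2) ^+ 2 + q0 (qmul (qconj c) c)) in
  Mx2 (qscale n1^-1 (qopp c)) (qscale n2^-1 (qopp c))
      (qreal ((a - l1) / n1)) (qreal ((a - l2) / n2)).
End Mats.

(* Main.v *)
Require Import Defs.
From HB Require Import structures.
From mathcomp Require Import all_boot all_order all_algebra.
From mathcomp Require Import ring lra.
Import Order.TTheory GRing.Theory Num.Theory.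
Local Open Scope ring_scope.

Definition qmx_add {R : rcfType} (A B : M2 (quat R)) : M2 (quat R) :=
  Mx2 (qadd (e11 A) (e11 B)) (qadd (e12 A) (e12 B)) (qadd (e21 A) (e21 B)) (qadd (e22 A) (e22 B)).
Definition qmx_I {R : rcfType} : M2 (quat R) := Mx2 (qone R) (qzero R) (qzero R) (qone R).
Definition qmx_0 {R : rcfType} : M2 (quat R) := Mx2 (qzero R) (qzero R) (qzero R) (qzero R).

Definition Vm {R : rcfType} (c : quat R) (p q : R) := Mx2 (qopp c) (qopp c) (qreal p) (qreal q).
Definition Dm {R : rcfType} (i1 i2 : R) := Mx2 (qreal i1) (qzero R) (qzero R) (qreal i2).

Ltac destr := repeat match goal with
  | A : M2 _ |- _ => destruct A
  | q : quat _ |- _ => destruct q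
  | d : dquat _ |- _ => destruct d end.
Ltac cong := repeat match goal with
  | |- Mx2 _ _ _ _ = Mx2 _ _ _ _ => f_equal
  | |- DQ _ _ = DQ _ _ => f_equal
  | |- Quat _ _ _ _ = Quat _ _ _ _ => f_equal end.
Ltac unf := cbv beta iota delta [qmx_add qmx_I qmx_0 qmx_mul qmx_ct dqmx_mul dqmx_ct dqmx_of
  m2mul m2ct dqmul dqadd dqconj qmul qadd qconj qzero qone qreal qscale qopp Vm Dm
  e11 e12 e21 e22 Defs.q0 Defs.q1 Defs.q2 Defs.q3 dst ddu].
Ltac brute := destr; unf; cong; ring.

Lemma L1 {R : rcfType} (A B C D : M2 (quat R)) :
  dqmx_mul (dqmx_of A C) (dqmx_of B D) = dqmx_of (qmx_mul A B) (qmx_add (qmx_mul A D) (qmx_mul C B)).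
Proof. brute. Qed.
Lemma L2 {R : rcfType} (A B : M2 (quat R)) :
  dqmx_ct (dqmx_of A B) = dqmx_of (qmx_ct A) (qmx_ct B).
Proof. brute. Qed.


Lemma m2eta {T : Type} (A : M2 T) : A = Mx2 (e11 A) (e12 A) (e21 A) (e22 A).
Proof. by case: A. Qed.


Lemma ctI {R : rcfType} : qmx_ct (@qmx_I R) = qmx_I.
Proof. brute. Qed.
Lemma ct0 {R : rcfType} : qmx_ct (@qmx_0 R) = qmx_0.
Proof. brute. Qed.
Lemma mmI {R : rcfType} (A : M2 (quat R)) : qmx_mul A qmx_I = A.
Proof. brute. Qed.
Lemma Imm {R : rcfType} (A : M2 (quat R)) : qmx_mul qmx_I A = A.
Proof. brute. Qed.
Lemma mm0l {R : rcfType} (A : M2 (quat R)) : qmx_mul qmx_0 A = qmx_0.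
Proof. brute. Qed.
Lemma addr0m {R : rcfType} (A : M2 (quat R)) : qmx_add A qmx_0 = A.
Proof. brute. Qed.
Lemma mmDr {R : rcfType} (A B C : M2 (quat R)) :
  qmx_mul A (qmx_add B C) = qmx_add (qmx_mul A B) (qmx_mul A C).
Proof. brute. Qed.
Lemma mmA {R : rcfType} (A B C : M2 (quat R)) :
  qmx_mul A (qmx_mul B C) = qmx_mul (qmx_mul A B) C.
Proof. brute. Qed.

Lemma ctmm {R : rcfType} (A B : M2 (quat R)) :
  qmx_ct (qmx_mul A B) = qmx_mul (qmx_ct B) (qmx_ct A).
Proof. brute. Qed.

Lemma G3 {R : rcfType} (U W : M2 (quat R)) :
  qmx_add (qmx_mul (qmx_ct U) (qmx_mul U W)) (qmx_mul (qmx_ct (qmx_mul U W)) U)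
  = qmx_add (qmx_mul (qmx_mul (qmx_ct U) U) W) (qmx_mul (qmx_ct W) (qmx_mul (qmx_ct U) U)).
Proof. brute. Qed.

Lemma G4 {R : rcfType} (U W : M2 (quat R)) :
  qmx_add (qmx_mul U (qmx_ct (qmx_mul U W))) (qmx_mul (qmx_mul U W) (qmx_ct U))
  = qmx_mul U (qmx_mul (qmx_add W (qmx_ct W)) (qmx_ct U)).
Proof. brute. Qed.

Lemma G5 {R : rcfType} (W : M2 (quat R)) :
  qmx_add (qmx_mul qmx_I W) (qmx_mul (qmx_ct W) qmx_I) = qmx_add W (qmx_ct W).
Proof. brute. Qed.

Lemma G6 {R : rcfType} (U : M2 (quat R)) :
  qmx_mul U (qmx_mul qmx_0 (qmx_ct U)) = qmx_0.
Proof. brute. Qed.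

Lemma ctM {R : rcfType} (U X : M2 (quat R)) :
  qmx_ct (qmx_mul (qmx_ct U) (qmx_mul X U)) = qmx_mul (qmx_ct U) (qmx_mul (qmx_ct X) U).
Proof. brute. Qed.

Lemma Wskew {R : rcfType} (l1 l2 : R) (z : quat R) : l1 != l2 ->
  qmx_add (Mx2 (qzero R) (qscale (l2 - l1)^-1 z) (qscale (l1 - l2)^-1 (qconj z)) (qzero R))
   (qmx_ct (Mx2 (qzero R) (qscale (l2 - l1)^-1 z) (qscale (l1 - l2)^-1 (qconj z)) (qzero R))) = qmx_0.
Proof.
move=> Hl; have h1 : l2 - l1 != 0 by rewrite subr_eq0 eq_sym.
have h2 : l1 - l2 != 0 by rewrite subr_eq0.
destr; unf; cong; field; by rewrite ?h1 ?h2.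
Qed.

Lemma Fin {R : rcfType} (l1 l2 : R) (x z y : quat R) : l1 != l2 ->
  qmx_add (qmx_add (qmx_mul (Mx2 (qreal l1) (qzero R) (qzero R) (qreal l2))
     (Mx2 (qzero R) (qscale (l2 - l1)^-1 z) (qscale (l1 - l2)^-1 (qconj z)) (qzero R)))
     (Mx2 x z (qconj z) y))
   (qmx_mul (qmx_ct (Mx2 (qzero R) (qscale (l2 - l1)^-1 z) (qscale (l1 - l2)^-1 (qconj z)) (qzero R)))
     (Mx2 (qreal l1) (qzero R) (qzero R) (qreal l2)))
  = Mx2 x (qzero R) (qzero R) y.
Proof.
move=> Hl; have h1 : l2 - l1 != 0 by rewrite subr_eq0 eq_sym.
have h2 : l1 - l2 != 0 by rewrite subr_eq0.
destr; unf; cong; field; by rewrite ?h1 ?h2.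
Qed.


Lemma sandwich {R : rcfType} (V X : M2 (quat R)) (i1 i2 f1 f2 f3 f4 : R) :
  qmx_mul (qmx_ct V) (qmx_mul X V) = Mx2 (qreal f1) (qreal f2) (qreal f3) (qreal f4) ->
  qmx_mul (qmx_ct (qmx_mul V (Dm i1 i2))) (qmx_mul X (qmx_mul V (Dm i1 i2)))
  = Mx2 (qreal (i1 * f1 * i1)) (qreal (i1 * f2 * i2)) (qreal (i2 * f3 * i1)) (qreal (i2 * f4 * i2)).
Proof.
move=> H.
have -> : qmx_mul (qmx_ct (qmx_mul V (Dm i1 i2))) (qmx_mul X (qmx_mul V (Dm i1 i2)))
  = qmx_mul (Dm i1 i2) (qmx_mul (qmx_mul (qmx_ct V) (qmx_mul X V)) (Dm i1 i2)).
  have ctD : qmx_ct (Dm i1 i2) = Dm i1 i2 by rewrite /Dm; brute.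
  by rewrite ctmm -!mmA ctD.
rewrite H /Dm; brute.
Qed.

Definition qn {R : rcfType} (c : quat R) := Defs.q0 (qmul (qconj c) c).

Lemma VV {R : rcfType} (c : quat R) (p q : R) :
  qmx_mul (qmx_ct (Vm c p q)) (qmx_mul qmx_I (Vm c p q)) =
  Mx2 (qreal (qn c + p * p)) (qreal (qn c + p * q)) (qreal (qn c + q * p)) (qreal (qn c + q * q)).
Proof. rewrite /qn /Vm; brute. Qed.

Lemma VQV {R : rcfType} (c : quat R) (a b p q : R) :
  qmx_mul (qmx_ct (Vm c p q)) (qmx_mul (Mx2 (qreal a) c (qconj c) (qreal b)) (Vm c p q)) =
  Mx2 (qreal (a * qn c - qn c * (p + p) + b * p * p)) (qreal (a * qn c - qn c * (p + q) + b * p * q))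
      (qreal (a * qn c - qn c * (q + p) + b * q * p)) (qreal (a * qn c - qn c * (q + q) + b * q * q)).
Proof. rewrite /qn /Vm; brute. Qed.

Lemma UUs {R : rcfType} (c : quat R) (p q i1 i2 : R) :
  qmx_mul (qmx_mul (Vm c p q) (Dm i1 i2)) (qmx_ct (qmx_mul (Vm c p q) (Dm i1 i2))) =
  Mx2 (qreal (qn c * (i1 * i1 + i2 * i2))) (qscale (- (p * i1 * i1 + q * i2 * i2)) c)
      (qscale (- (p * i1 * i1 + q * i2 * i2)) (qconj c)) (qreal (p * p * i1 * i1 + q * q * i2 * i2)).
Proof. rewrite /qn /Vm /Dm; brute. Qed.

Lemma Uform {R : rcfType} (a : R) (c : quat R) (l1 l2 : R) :
  Umat a c l1 l2 = qmx_mul (Vm c (a - l1) (a - l2))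
     (Dm (Num.sqrt ((a - l1) ^+ 2 + qn c))^-1 (Num.sqrt ((a - l2) ^+ 2 + qn c))^-1).
Proof.
rewrite /Umat /qn /Vm /Dm.
move: (Num.sqrt _) (Num.sqrt _) => n1 n2.
brute.
Qed.

Lemma qscale0 {R : rcfType} (c : quat R) : qscale 0 c = qzero R.
Proof. brute. Qed.

Lemma qn_ge0 {R : rcfType} (c : quat R) : 0 <= qn c.
Proof. case: c => c0 c1 c2 c3; rewrite /qn /=; nra. Qed.

Lemma qn_eq0 {R : rcfType} (c : quat R) : qn c = 0 -> c = qzero R.
Proof.
case: c => c0 c1 c2 c3; rewrite /qn /= => h.
have h0 : c0 * c0 = 0 by nra.
have h1 : c1 * c1 = 0 by nra.
have h2 : c2 * c2 = 0 by nra.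
have h3 : c3 * c3 = 0 by nra.
move/eqP: h0; rewrite mulf_eq0 orbb => /eqP ->.
move/eqP: h1; rewrite mulf_eq0 orbb => /eqP ->.
move/eqP: h2; rewrite mulf_eq0 orbb => /eqP ->.
move/eqP: h3; rewrite mulf_eq0 orbb => /eqP ->.
by [].
Qed.

Lemma realb {R : rcfType} (a b l1 l2 s : R) :
  (a - l1) * (b - l1) = s -> (a - l2) * (b - l2) = s -> l1 != l2 -> b = l1 + l2 - a.
Proof.
move=> hs1 hs2 Hl.
have e : (l2 - l1) * (l1 + l2 - a - b) = (a - l2) * (b - l2) - (a - l1) * (b - l1) by ring.
move: e; rewrite hs1 hs2 subrr => /eqP; rewrite mulf_eq0 subr_eq0 eq_sym (negbTE Hl) /=.
by move=> /eqP e; rewrite -[b]addr0 -e; ring.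
Qed.

Theorem proposition3p4 (R : rcfType) (a b : R) (c : quat R) (QI : M2 (quat R))
    (l1 l2 : R) :
  let Qst := Mx2 (qreal a) c (qconj c) (qreal b) in
  let Q := dqmx_of Qst QI in
  dqmx_hermitian Q ->
  c <> qzero R ->
  qreal ((a - l1) * (b - l1)) = qmul (qconj c) c ->
  qreal ((a - l2) * (b - l2)) = qmul (qconj c) c ->
  l1 != l2 ->
  let U := Umat a c l1 l2 in
  let M := qmx_mul (qmx_ct U) (qmx_mul QI U) in
  let x := e11 M in let z := e12 M in let y := e22 M in
  let V := Mx2 (dqone R) (DQ (qzero R) (qscale (l2 - l1)^-1 z))
               (DQ (qzero R) (qscale (l1 - l2)^-1 (qconj z))) (dqone R) in
  let Uh := m2map (@dq_of_q R) U in
  dqmx_mul (dqmx_ct V) (dqmx_mul (dqmx_ct Uh) (dqmx_mul (dqmx_ct Q) (dqmx_mul Uh V)))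
    = dqmx_diag (DQ (qreal l1) x) (DQ (qreal l2) y)
  /\ dqmx_unitary (dqmx_mul Uh V).
Proof.
move=> Qst Q Hh Hc H1 H2 Hl U M x z y V Uh.
have dinj : forall A B C D : M2 (quat R), dqmx_of A B = dqmx_of C D -> B = D.
  move=> A B C D /(congr1 (m2map (@ddu R))); by case: B; case: D.
have HQI : qmx_ct QI = QI.
  by move: Hh; rewrite /dqmx_hermitian /Q L2 => /dinj.
have HM : qmx_ct M = M by rewrite /M ctM HQI.
have He21 : e21 M = qconj z by rewrite -[in LHS]HM.
have HMe : M = Mx2 x z (qconj z) y by rewrite [LHS]m2eta He21.
have hs1 : (a - l1) * (b - l1) = qn c by rewrite /qn -H1.
have hs2 : (a - l2) * (b - l2) = qn c by rewrite /qn -H2.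
have hb : b = l1 + l2 - a by exact: (@realb _ a b l1 l2 (qn c) hs1 hs2 Hl).
have hs : qn c = (a - l1) * (l2 - a) by rewrite -hs1 hb; ring.
have spos : 0 < qn c.
  rewrite lt_def qn_ge0 andbT; apply/eqP => /qn_eq0; exact: Hc.
have hp : a - l1 != 0.
  apply/eqP => e; move: spos; rewrite hs e mul0r ltxx //.
have hq : a - l2 != 0.
  apply/eqP => e; move: spos; rewrite hs.
  have -> : l2 - a = - (a - l2) by rewrite opprB.
  by rewrite e oppr0 mulr0 ltxx.
have hpq : l2 - l1 != 0 by rewrite subr_eq0 eq_sym.
have t1pos : 0 < (a - l1) ^+ 2 + qn c by apply: ltr_wpDl; [exact: sqr_ge0|].
have t2pos : 0 < (a - l2) ^+ 2 + qn c by apply: ltr_wpDl; [exact: sqr_ge0|].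
set t1 := (a - l1) ^+ 2 + qn c in t1pos.
set t2 := (a - l2) ^+ 2 + qn c in t2pos.
have hi1 : (Num.sqrt t1)^-1 * (Num.sqrt t1)^-1 = t1^-1.
  by rewrite -invfM -expr2 sqr_sqrtr // ltW.
have hi2 : (Num.sqrt t2)^-1 * (Num.sqrt t2)^-1 = t2^-1.
  by rewrite -invfM -expr2 sqr_sqrtr // ltW.
have Ue : U = qmx_mul (Vm c (a - l1) (a - l2)) (Dm (Num.sqrt t1)^-1 (Num.sqrt t2)^-1) by rewrite /U Uform.
move: (Num.sqrt t1)^-1 (Num.sqrt t2)^-1 hi1 hi2 Ue => i1 i2 hi1 hi2 Ue.
have ht1 : t1 = (a - l1) * (l2 - l1) by rewrite /t1 hs; ring.
have ht2 : t2 = (a - l2) * (l1 - l2) by rewrite /t2 hs; ring.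
have hqp : l1 - l2 != 0 by rewrite subr_eq0.
have UU : qmx_mul (qmx_ct U) U = qmx_I.
  have := @sandwich R _ qmx_I i1 i2 _ _ _ _ (VV c (a - l1) (a - l2)).
  rewrite -Ue Imm => ->.
  have r11 : i1 * (qn c + (a - l1) * (a - l1)) * i1 = 1.
    transitivity ((i1 * i1) * t1); first by rewrite /t1; ring.
    by rewrite hi1 mulVf // gt_eqF.
  have r22 : i2 * (qn c + (a - l2) * (a - l2)) * i2 = 1.
    transitivity ((i2 * i2) * t2); first by rewrite /t2; ring.
    by rewrite hi2 mulVf // gt_eqF.
  have r12 : qn c + (a - l1) * (a - l2) = 0 by rewrite hs; ring.
  have r21 : qn c + (a - l2) * (a - l1) = 0 by rewrite hs; ring.
  by rewrite r11 r22 r12 r21 !mulr0 !mul0r.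
have UUt : qmx_mul U (qmx_ct U) = qmx_I.
  rewrite Ue UUs -!mulrA hi1 hi2.
  have r11 : qn c * (t1^-1 + t2^-1) = 1.
    rewrite ht1 ht2 hs; field; by rewrite hp hq hpq hqp.
  have r12 : - ((a - l1) * t1^-1 + (a - l2) * t2^-1) = 0.
    rewrite ht1 ht2; field; by rewrite hp hq hpq hqp.
  have r22 : (a - l1) * ((a - l1) * t1^-1) + (a - l2) * ((a - l2) * t2^-1) = 1.
    rewrite ht1 ht2; field; by rewrite hp hq hpq hqp.
  by rewrite r11 r12 r22 !qscale0.
have HD : qmx_mul (qmx_ct U) (qmx_mul Qst U) = Mx2 (qreal l1) (qzero R) (qzero R) (qreal l2).
  have := @sandwich R _ Qst i1 i2 _ _ _ _ (VQV c a b (a - l1) (a - l2)).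
  rewrite -Ue => ->.
  have r11 : i1 * (a * qn c - qn c * ((a - l1) + (a - l1)) + b * (a - l1) * (a - l1)) * i1 = l1.
    transitivity ((i1 * i1) * t1 * l1); first by rewrite /t1 hs hb; ring.
    by rewrite hi1 mulVf ?mul1r // gt_eqF.
  have r22 : i2 * (a * qn c - qn c * ((a - l2) + (a - l2)) + b * (a - l2) * (a - l2)) * i2 = l2.
    transitivity ((i2 * i2) * t2 * l2); first by rewrite /t2 hs hb; ring.
    by rewrite hi2 mulVf ?mul1r // gt_eqF.
  have r12 : a * qn c - qn c * ((a - l1) + (a - l2)) + b * (a - l1) * (a - l2) = 0 by rewrite hs hb; ring.
  have r21 : a * qn c - qn c * ((a - l2) + (a - l1)) + b * (a - l2) * (a - l1) = 0 by rewrite hs hb; ring.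
  by rewrite r11 r22 r12 r21 !mulr0 !mul0r.
rewrite Hh.
set W := Mx2 (qzero R) (qscale (l2 - l1)^-1 z) (qscale (l1 - l2)^-1 (qconj z)) (qzero R).
have hW : qmx_add W (qmx_ct W) = qmx_0 := Wskew l1 l2 z Hl.
have hF : qmx_add (qmx_add (qmx_mul (Mx2 (qreal l1) (qzero R) (qzero R) (qreal l2)) W)
     (Mx2 x z (qconj z) y)) (qmx_mul (qmx_ct W) (Mx2 (qreal l1) (qzero R) (qzero R) (qreal l2)))
  = Mx2 x (qzero R) (qzero R) y := Fin l1 l2 x z y Hl.
have -> : V = dqmx_of qmx_I W by [].
have -> : Uh = dqmx_of U qmx_0 by rewrite /Uh; case: (U).
rewrite /Q !L1 !L2 !L1.
split.
  rewrite ?ctI ?ct0 ?mmI ?Imm ?mm0l ?addr0m mmDr (mmA Qst U W) (mmA (qmx_ct U) _ W) HD.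
  rewrite -/M HMe hF.
  by [].
rewrite /dqmx_unitary !L2 !L1 ?ctI ?ct0 ?mmI ?Imm ?mm0l ?addr0m.
split.
  by rewrite G3 UU Imm mmI hW.
by rewrite G4 hW G6 UUt.
Qed.
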